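(* Under the standing assumptions and definitions in the context, let $\mathbf{x}^*\in\Gamma$ be a fixed point of the convex feasible set iteration, i.e., $\mathbf{x}^*=\arg\min_{\mathbf{x}\in\mathcal{F}(\mathbf{x}^* )}J(\mathbf{x})$. Then $\mathbf{x}^*$ is a strong local optimum of $\min_{\mathbf{x}\in\Gamma}J(\mathbf{x})$, i.e., $\nabla J(\mathbf{x}^* )\cdot v\ge0$ for all $v\in C(\mathbf{x}^* )$.
   Context: Problem: minimize $J(\mathbf{x})$ over $\mathbf{x}\in\Gamma\subset\mathbb{R}^n$, where (i) $J:\mathbb{R}^n\to\mathbb{R}^+$ is smooth and strictly convex; (ii) $\Gamma$ is connected and closed with piecewise smooth, non-self-intersecting boundary, and every point of $\Gamma$ lies in some $n$-dimensional convex polytope contained in $\Gamma$. Semi-convex decomposition: $\Gamma=\bigcap_{i=1}^N\Gamma_i$, $\Gamma_i=\{\mathbf{x}:\phi_i(\mathbf{x})\ge 0\}$, $\partial\Gamma_i=\{\mathbf{x}:\phi_i(\mathbf{x})=0\}$, where each $\phi_i:\mathbb{R}^n\to\mathbb{R}$ is continuous, piecewise smooth and semi-convex: there is a positive semidefinite $H_i^*$ such that $\mathbf{x}\mapsto\phi_i(\mathbf{x})+\frac12(\mathbf{x}-\mathbf{x}_0)^TH_i^*(\mathbf{x}-\mathbf{x}_0)$ is convex for every $\mathbf{x}_0$. One-sided directional derivative: $\partial_v\phi_i(\mathbf{x})=\lim_{a\to0^+}(\phi_i(\mathbf{x}+av)-\phi_i(\mathbf{x}))/a$. Sub-differential: $D\phi_i(\mathbf{x})=\{d\in\mathbb{R}^n: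 d\cdot v\le\partial_v\phi_i(\mathbf{x})\ \forall v\in\mathbb{R}^n\}$. It is assumed that: (1) $D\phi_i(\mathbf{x})\neq\{0\}$ for all $\mathbf{x}$; (2) $0\notin D\phi_i(\mathbf{x})$ if $\mathbf{x}\in\partial\Gamma_i$; (3) for any $\mathbf{x}$ with $I:=\{i:\phi_i(\mathbf{x})=0\}\ne\emptyset$ there is $v$ with $\partial_v\phi_i(\mathbf{x})<0$ for all $i\in I$. Feasible directions and optimal sub-gradients at a reference $\mathbf{x}^r$: a unit vector $v$ is a feasible search direction if for every $i$: $\phi_i(\mathbf{x}^r)>0$; or $\phi_i(\mathbf{x}^r)=0$ and some $d\in D\phi_i(\mathbf{x}^r)$ has $v\cdot d\ge0$; or $\phi_i(\mathbf{x}^r)<0$ and some $d\in D\phi_i(\mathbf{x}^r)$ has $v\cdot d>0$. Let $C(\mathbf{x}^r)$ be the set of these, and $v^*=\arg\min_{v\in C(\mathbf{x}^r)}\nabla J(\mathbf{x}^r)\cdot v$ (ties broken lexicographically by smallest first entry, then second, etc.). Let $DF_i=D\phi_i(\mathbf{x}^r)$ if $\phi_i(\mathbf{x}^r)>0$, $DF_i=\{d\in D\phi_i(\mathbf{x}^r):d\cdot v^*\ge0\}$ if $\phi_i(\mathbf{x}^r)=0$, $DF_i=\{d\in D\phi_i(\mathbf{x}^r):d\cdot v^*>0\}$ if $\phi_i(\mathbf{x}^r)<0$, and $\hat\nabla\phi_i(\mathbf{x}^r)=\arg\min_{d\in DF_i}\nabla J(\mathbf{x}^r)\cdot d/\|d\|$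 (with $d/\|d\|:=0$ if $d=0$). Convex feasible set: $\mathcal{F}_i(\mathbf{x}^r)=\Gamma_i$ if $\phi_i$ is concave; $\mathcal{F}_i(\mathbf{x}^r)=\{\mathbf{x}:\phi_i(\mathbf{x}^r)+\hat\nabla\phi_i(\mathbf{x}^r)(\mathbf{x}-\mathbf{x}^r)\ge0\}$ if $\phi_i$ is convex; $\mathcal{F}_i(\mathbf{x}^r)=\{\mathbf{x}:\phi_i(\mathbf{x}^r)+\hat\nabla\phi_i(\mathbf{x}^r)(\mathbf{x}-\mathbf{x}^r)\ge\frac12(\mathbf{x}-\mathbf{x}^r)^TH_i^*(\mathbf{x}-\mathbf{x}^r)\}$ otherwise; $\mathcal{F}(\mathbf{x}^r)=\bigcap_{i=1}^N\mathcal{F}_i(\mathbf{x}^r)$. *)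

(* Defs.v *)
(* R^n is modelled as row vectors 'rV[R]_n
   over an arbitrary R : realType. *)
From HB Require Import structures.
From mathcomp Require Import all_boot all_order all_algebra.
From mathcomp Require Import all_classical all_reals all_analysis.
Set Implicit Arguments. Unset Strict Implicit. Unset Printing Implicit Defensive.
Import Order.TTheory GRing.Theory Num.Theory.
Import numFieldNormedType.Exports.
Local Open Scope classical_set_scope.
Local Open Scope ring_scope.

Section Defs.
Variables (R : realType) (n : nat).
Local Notation V := 'rV[R]_n.

Definition dot (u v : V) : R := \sum_(k < n) u ord0 k * v ord0 k.
Definition enorm (u : V) : R := Num.sqrt (dot u u).

Definition qform (H : 'M[R]_n) (u : V) : R := (u *m H *m u^T) ord0 ord0.

Definition psd (H : 'M[R]_n) : Prop := H^T = H /\ forall u : V, 0 <= qform H u.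

Definition grad (f : V -> R) (x : V) : V := \row_k ('d f x (delta_mx ord0 k) : R).

Definition convex_fun (f : V -> R) : Prop :=
  forall x y (t : R), 0 <= t <= 1 ->
    f (t *: x + (1 - t) *: y) <= t * f x + (1 - t) * f y.
Definition concave_fun (f : V -> R) : Prop := convex_fun (fun x => - f x).
Definition strictly_convex_fun (f : V -> R) : Prop :=
  forall x y (t : R), x != y -> 0 < t < 1 ->
    f (t *: x + (1 - t) *: y) < t * f x + (1 - t) * f y.

Fixpoint Ck (k : nat) (f : V -> R) : Prop :=
  match k with
  | 0%N => continuous f
  | k'.+1 => (forall x, differentiable f x) /\ forall v : V, Ck k' ('D_v f)
  end.
Definition smooth (f : V -> R) : Prop := forall k, Ck k f.

Definition piecewise_smooth (f : V -> R) : Prop :=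
  continuous f /\
  exists (m : nat) (g : 'I_m -> V -> R),
    (forall j, smooth (g j)) /\ forall x, exists j, f x = g j x.

Definition semi_convex_with (f : V -> R) (H : 'M[R]_n) : Prop :=
  psd H /\ forall x0 : V, convex_fun (fun x => f x + 2^-1 * qform H (x - x0)).

Definition dirder_is (f : V -> R) (x v : V) (l : R) : Prop :=
  (fun a : R => (f (x + a *: v) - f x) / a) @ 0^'+ --> l.

Definition subdiff (f : V -> R) (x : V) : set V :=
  [set d | forall v : V, exists l, dirder_is f x v l /\ dot d v <= l].

Definition bdry (A : set V) : set V := closure A `\` interior A.

Definition polytope (s : seq V) : set V :=
  [set x | exists w : 'I_(size s) -> R,
     (forall k, 0 <= w k) /\ \sum_k w k = 1 /\ x = \sum_k w k *: s`_(val k)].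

Definition lex_le (u v : V) : Prop :=
  u = v \/ exists k : 'I_n, (forall j : 'I_n, (j < k)%N -> u ord0 j = v ord0 j)
                            /\ u ord0 k < v ord0 k.

Section Iteration.
Variables (N : nat) (phi : 'I_N -> V -> R) (H : 'I_N -> 'M[R]_n) (J : V -> R).

Definition Gamma_i (i : 'I_N) : set V := [set x | 0 <= phi i x].
Definition Gamma : set V := \bigcap_(i in setT) Gamma_i i.

Definition feasible_dirs (xr : V) : set V :=
  [set v | enorm v = 1 /\ forall i,
     0 < phi i xr \/
     (phi i xr = 0 /\ exists2 d, subdiff (phi i) xr d & 0 <= dot v d) \/
     (phi i xr < 0 /\ exists2 d, subdiff (phi i) xr d & 0 < dot v d)].

Definition is_vstar (xr vs : V) : Prop :=
  feasible_dirs xr vs /\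
  (forall v, feasible_dirs xr v -> dot (grad J xr) vs <= dot (grad J xr) v) /\
  (forall v, feasible_dirs xr v -> dot (grad J xr) v = dot (grad J xr) vs ->
     lex_le vs v).

Definition DF (xr vs : V) (i : 'I_N) : set V :=
  [set d | subdiff (phi i) xr d /\
     (0 < phi i xr \/ (phi i xr = 0 /\ 0 <= dot d vs)
                   \/ (phi i xr < 0 /\ 0 < dot d vs))].

(* d / ||d||, with the convention 0 / ||0|| := 0 *)
Definition normalize (d : V) : V := if d == 0 then 0 else (enorm d)^-1 *: d.

Definition is_opt_subgrad (xr vs : V) (i : 'I_N) (g : V) : Prop :=
  DF xr vs i g /\
  forall d, DF xr vs i d ->
    dot (grad J xr) (normalize g) <= dot (grad J xr) (normalize d).

Definition F_i (xr : V) (i : 'I_N) (g : V) : set V :=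
  [set x |
     (concave_fun (phi i) -> 0 <= phi i x) /\
     (~ concave_fun (phi i) -> convex_fun (phi i) ->
        0 <= phi i xr + dot g (x - xr)) /\
     (~ concave_fun (phi i) -> ~ convex_fun (phi i) ->
        2^-1 * qform (H i) (x - xr) <= phi i xr + dot g (x - xr))].

Definition Fset (xr : V) (g : 'I_N -> V) : set V :=
  \bigcap_(i in setT) F_i xr i (g i).

End Iteration.
End Defs.

(* Main.v *)
Require Import Defs.
From HB Require Import structures.
From mathcomp Require Import all_boot all_order all_algebra.
From mathcomp Require Import all_classical all_reals all_analysis.
From mathcomp Require Import ring lra.
Import Order.TTheory GRing.Theory Num.Theory.
Import numFieldNormedType.Exports.
Local Open Scope classical_set_scope.
Local Open Scope ring_scope.

Lemma dotDr (R : realType) (n : nat) (u v w : 'rV[R]_n) :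
  dot u (v + w) = dot u v + dot u w.
Proof. by rewrite /dot -big_split; apply: eq_bigr => k _; rewrite mxE mulrDr. Qed.

Lemma dotZr (R : realType) (n : nat) (u v : 'rV[R]_n) a :
  dot u (a *: v) = a * dot u v.
Proof. by rewrite /dot mulr_sumr; apply: eq_bigr => k _; rewrite mxE mulrCA. Qed.

Lemma dotBr (R : realType) (n : nat) (u v w : 'rV[R]_n) :
  dot u (v - w) = dot u v - dot u w.
Proof. by rewrite dotDr -scaleN1r dotZr mulN1r. Qed.

Lemma qformZ (R : realType) (n : nat) (H : 'M[R]_n) (w : 'rV[R]_n) a :
  qform H (a *: w) = a ^+ 2 * qform H w.
Proof.
rewrite /qform -scalemxAl -scalemxAl linearZ /= -scalemxAr.
by rewrite !mxE mulrA expr2.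
Qed.

Lemma grad_dot (R : realType) (n : nat) (J : 'rV[R]_n -> R) x w :
  dot (grad J x) w = 'd J x w.
Proof.
rewrite {2}(row_sum_delta w) linear_sum /dot; apply: eq_bigr => k _.
by rewrite linearZ /= mxE mulrC.
Qed.

Lemma small_poly (R : realType) (c b k : R) : 0 < c ->
  \forall a \near 0^'+, a * b + a ^+ 2 * k < c.
Proof.
move=> c0.
have e0 : 0 < c / (`|b| + `|k| + 1) by apply: divr_gt0 => //; rewrite ltr_wpDl // addr_ge0.
near=> a.
have a0 : 0 < a by near: a; exact: nbhs_right_gt.
have a1 : a < 1 by near: a; exact: nbhs_right_lt.
have ae : a < c / (`|b| + `|k| + 1) by near: a; exact: nbhs_right_lt.
have hb : a * b <= a * `|b| by apply: ler_wpM2l; [exact: ltW | exact: ler_norm].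
have hk : a ^+ 2 * k <= a * `|k|.
  apply: (le_trans (y := a ^+ 2 * `|k|)).
    by apply: ler_wpM2l; [exact: exprn_ge0; exact: ltW | exact: ler_norm].
  rewrite expr2 -mulrA; apply: ler_wpM2l; first exact: ltW.
  by rewrite ler_piMl // ltW.
have hD : 0 < `|b| + `|k| + 1 by rewrite ltr_wpDl // addr_ge0.
have : a * (`|b| + `|k| + 1) < c by rewrite -ltr_pdivlMr.
have : 0 <= a * 1 by rewrite mulr1 ltW.
lra.
Unshelve. all: by end_near. Qed.
Theorem proposition4p3 (R : realType) (n N : nat)
    (J : 'rV[R]_n -> R) (phi : 'I_N -> 'rV[R]_n -> R) (H : 'I_N -> 'M[R]_n)
    (xs vs : 'rV[R]_n) (ghat : 'I_N -> 'rV[R]_n) :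
  smooth J -> strictly_convex_fun J -> (forall x, 0 <= J x) ->
  connected (Gamma phi) -> closed (Gamma phi) ->
  (forall x, Gamma phi x -> exists s : seq 'rV[R]_n,
      polytope s x /\ polytope s `<=` Gamma phi /\ interior (polytope s) !=set0) ->
  (forall i, bdry (Gamma_i phi i) = [set x | phi i x = 0]) ->
  (forall i, piecewise_smooth (phi i)) ->
  (forall i, semi_convex_with (phi i) (H i)) ->
  (forall i x, subdiff (phi i) x <> [set 0]) ->
  (forall i x, phi i x = 0 -> ~ subdiff (phi i) x 0) ->
  (forall x, (exists i, phi i x = 0) ->
     exists v, forall i, phi i x = 0 ->
       exists2 l, dirder_is (phi i) x v l & l < 0) ->
  Gamma phi xs ->
  is_vstar phi J xs vs ->
  (forall i, is_opt_subgrad phi J xs vs i (ghat i)) ->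
  Fset phi H xs ghat xs ->
  (forall x, Fset phi H xs ghat x -> J xs <= J x) ->
  forall v, feasible_dirs phi xs v -> 0 <= dot (grad J xs) v.
Proof.
move=> sJ _ _ _ _ _ _ psm _ _ _ A3 Gxs [fvs [vmin _]] hg _ Jmin v fv.
rewrite leNgt; apply/negP => gv.
set g := grad J xs.
have gvs : dot g vs < 0 by apply: le_lt_trans (vmin v fv) gv.
have [u hu] : exists u, forall i, phi i xs = 0 ->
    exists2 l, dirder_is (phi i) xs u l & l < 0.
  case: (pselect (exists i, phi i xs = 0)) => [/A3 //|nex].
  by exists 0 => i hi; exfalso; apply: nex; exists i.
set eps := - dot g vs / (2 * (`|dot g u| + 1)).
have D0 : 0 < 2 * (`|dot g u| + 1) by rewrite mulr_gt0 // ltr_wpDl.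
have eps0 : 0 < eps by rewrite divr_gt0 // oppr_gt0.
have epsE : eps * (2 * (`|dot g u| + 1)) = - dot g vs by rewrite divfK // gt_eqF.
set w := vs - eps *: u.
have gw : dot g w < 0.
  rewrite dotBr dotZr.
  have : - (eps * dot g u) <= eps * `|dot g u|.
    by rewrite -mulrN; apply: ler_wpM2l; [exact: ltW | rewrite -normrN ler_norm].
  have : 0 <= `|dot g u| by [].
  nra.
have key : forall i, \forall a \near 0^'+, F_i phi H xs i (ghat i) (xs + a *: w).
  move=> i.
  have [[sub hcase] _] := hg i.
  have phi0 : 0 <= phi i xs by exact: (Gxs i I).
  have xsub : forall a, xs + a *: w - xs = a *: w by move=> a; rewrite addrC addKr.
  move: (phi0); rewrite le_eqVlt => /orP [/eqP pz | ppos].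
  -
    have gvs_i : 0 <= dot (ghat i) vs.
      case: hcase => [|[[_ //]|[]]]; [by rewrite -pz ltxx | by rewrite -pz ltxx].
    have [l hl l0] := hu i (esym pz).
    have [l' [hl' gl']] := sub u.
    have ll' : l = l' by apply: (cvg_unique (@norm_hausdorff _ R^o) hl hl').
    have gwi : 0 < dot (ghat i) w.
      rewrite dotBr dotZr.
      have : eps * dot (ghat i) u < 0 by rewrite pmulr_rlt0 // (le_lt_trans gl') // -ll'.
      lra.
    have [l2 [hl2 gl2]] := sub w.
    have := cvgr_gt _ hl2 0 (lt_le_trans gwi gl2).
    move=> hrat.
    near=> a.
    have a0 : 0 < a by near: a; exact: nbhs_right_gt.
    have ra : 0 < (phi i (xs + a *: w) - phi i xs) / a by near: a; exact: hrat.
    have pa : 0 < phi i (xs + a *: w).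
      by move: ra; rewrite pmulr_lgt0 ?invr_gt0 // -pz subr0.
    have hq : a * (2^-1 * qform (H i) w) + a ^+ 2 * 0 < dot (ghat i) w.
      by near: a; exact: small_poly.
    rewrite /F_i /=; rewrite xsub dotZr qformZ -pz add0r.
    split; [by move=> _; exact: ltW | split; [by move=> _ _; rewrite mulr_ge0 // ltW |]].
    move=> _ _.
    rewrite mulr0 addr0 in hq.
    rewrite (_ : 2^-1 * _ = a * (a * (2^-1 * qform (H i) w))); last by ring.
    by apply: ler_wpM2l; [exact: ltW | exact: ltW].
  -
    have hc : (fun a => phi i (xs + a *: w)) @ 0^'+ --> phi i xs.
      have h1 : (fun a : R => a *: w) @ (0:R) --> 0 *: w by apply: cvgZr_tmp; exact: cvg_id.
      have h2 : (fun a : R => xs + a *: w) @ (0:R) --> xs + 0 *: w.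
        by apply: cvgD => //; exact: cvg_cst.
      rewrite scale0r addr0 in h2.
      apply: cvg_at_right_filter.
      exact: (cvg_comp _ _ h2 ((psm i).1 xs)).
    have := cvgr_gt _ hc 0 ppos => hpos.
    near=> a.
    have h2 : a * (- dot (ghat i) w) + a ^+ 2 * 0 < phi i xs by near: a; exact: small_poly.
    have h3 : a * (- dot (ghat i) w) + a ^+ 2 * (2^-1 * qform (H i) w) < phi i xs.
      by near: a; exact: small_poly.
    rewrite /F_i /=; rewrite xsub dotZr qformZ.
    split; [by move=> _; apply: ltW; near: a; exact: hpos | split].
    + by move=> _ _; move: h2; rewrite mulr0 addr0; lra.
    + by move=> _ _; move: h3; lra.
have dJ : differentiable J xs by exact: (sJ 1%N).1.
have hd : derivable J xs w := diff_derivable dJ.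
have hlim : (fun h : R => h^-1 *: ((J \o shift xs) (h *: w) - J xs)) @ 0^' --> dot g w.
  by rewrite grad_dot -deriveE //; exact: hd.
have hJ0 := @cvgr_lt _ _ _ (dnbhs_filter _) _ _ hlim 0 gw.
have hJ : \forall a \near 0^'+, J (xs + a *: w) < J xs.
  move: hJ0; rewrite !near_withinE; apply: filterS => a ha a0.
  have := ha (lt0r_neq0 a0); rewrite /= => h.
  by move: h; rewrite pmulr_rlt0 ?invr_gt0 // [a *: w + xs]addrC subr_lt0.
have hall : \forall a \near 0^'+, forall i, F_i phi H xs i (ghat i) (xs + a *: w).
  by apply: filter_forall; exact: key.
have hboth : \forall a \near 0^'+, J (xs + a *: w) < J xs /\
    forall i, F_i phi H xs i (ghat i) (xs + a *: w).
  by near=> a; split; near: a; [exact: hJ | exact: hall].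
have [a [h1 h2]] := filter_ex hboth.
have := Jmin (xs + a *: w) (fun i _ => h2 i).
by rewrite leNgt h1.
Unshelve. all: by end_near.
Qed.
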